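(* Let $K$ be the $2$-uniform tiling of the plane whose vertex types are $[3^6]$ and $[3^2,4^1,12^1]$. If $X$ is a map on the torus that is a quotient $X=K/\Gamma$ of $K$, then the vertices of $X$ form at most $7$ orbits under ${\rm Aut}(X)$.
   Context: A map is a polyhedral map: a cellular embedding of a connected graph in a closed surface such that the intersection of any two distinct faces is empty, a single vertex, or a single edge. For a vertex $u$, the faces containing $u$ form a cyclic sequence (the face-cycle at $u$); if this cyclic sequence consists of consecutive blocks of $n_1$ $p_1$-gons, then $n_2$ $p_2$-gons, ..., then $n_k$ $p_k$-gons, with cyclically consecutive $p_i$ distinct, then $u$ is said to have type $[p_1^{n_1},\dots,p_k^{n_k}]$ (defined up to cyclic shift and reversal). A $2$-uniform tiling is an edge-to-edge tiling of the Euclidean plane $\mathbb{R}^2$ by regular polygons whose symmetry group has exactly two orbits on the set of vertices; viewed as a map on the plane, its vertices have (at most) two types, listed as $[W;Z]$. (Up to isomorphism there are exactly $20$ such tilings; there is exactly one with the vertex types named in the claim.) For a map $K$ on the plane, a quotient of $K$ on the torus is a map $X$ on the torus together with a polyhedral covering map $\eta:K\to X$ with $X=K/\Gamma$, where $\Gamma\le {\rm Aut}(K)$ is a subgroup acting without fixed vertices, edges or faces and $K/\Gamma$ is homeomorphic to the torus. ${\rm Aut}(X)$ denotes the automorphism group of the map $X$, acting on its vertex set $V(X)$. *)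

(* Defs.v *)
From Stdlib Require Import ZArith List.
From mathcomp Require Import all_boot.
Set Implicit Arguments.
Unset Strict Implicit.
Unset Printing Implicit Defensive.

(* Combinatorial maps.  A map on a vertex type V is given by its faces,     *)
(* each face being represented by its boundary cycle (a sequence of         *)
(* vertices).  The predicate [F : seq V -> Prop] holds for all the cyclic    *)
(* rotations and reversals of the boundary cycles of the faces.             *)

Definition adj_in (V : Type) (s : seq V) (u v : V) : Prop :=
  exists n t, rot n s = u :: v :: t.

Definition edge (V : Type) (F : seq V -> Prop) (u v : V) : Prop :=
  exists s, F s /\ adj_in s u v.

Definition faceset (V : Type) (F : seq V -> Prop) (A : V -> Prop) : Prop :=
  exists s, F s /\ forall x, A x <-> List.In x s.

Definition polyhedral (V : Type) (F : seq V -> Prop) : Prop :=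
  (forall s, F s -> List.NoDup s) /\
  forall s t, F s -> F t -> ~ (forall x, List.In x s <-> List.In x t) ->
    (forall x, ~ (List.In x s /\ List.In x t)) \/
    (exists u, forall x, (List.In x s /\ List.In x t) <-> x = u) \/
    (exists u v, edge F u v /\
       forall x, (List.In x s /\ List.In x t) <-> (x = u \/ x = v)).

Definition map_aut (V : Type) (F : seq V -> Prop) (f : V -> V) : Prop :=
  bijective f /\ forall s, F s <-> F (map f s).

Definition card_is (T : Type) (P : T -> Prop) (n : nat) : Prop :=
  exists l : list T, List.NoDup l /\ length l = n /\
    forall x, P x <-> List.In x l.

Definition orientable (V : Type) (F : seq V -> Prop) : Prop :=
  exists O : seq V -> Prop,
    (forall t, O t -> F t) /\
    (forall t n, O t -> O (rot n t)) /\
    (forall t, F t -> (O t \/ O (rev t)) /\ ~ (O t /\ O (rev t))) /\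
    (forall t t' u v, O t -> O t' -> adj_in t u v -> adj_in t' u v ->
        exists n, t' = rot n t).

(* A finite map on the torus: finitely many vertices, edges, faces,       *)
(* orientable and of Euler characteristic V - E + F = 0.  Edges are       *)
(* counted through darts (ordered adjacent pairs), #darts = 2 E.           *)
Definition torus_map (V : Type) (F : seq V -> Prop) : Prop :=
  orientable F /\
  exists nV nD nF,
    card_is (fun _ : V => True) nV /\
    card_is (fun d : V * V => edge F d.1 d.2) nD /\
    card_is (faceset F) nF /\
    nD = 2 * (nV + nF).

(* Dodecagons (side 1) are centred at the points of the lattice             *)
(* Z a1 + Z a2, a1 = (3+sqrt 3)(1,0), a2 = (3+sqrt 3)(1/2, sqrt 3/2).        *)
(* A vertex is (i, j, k): the translate by i a1 + j a2 of the k-th          *)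
(* representative: k < 12 is the vertex of the dodecagon centred at 0 at    *)
(* angle 15 + 30 k degrees; k = 12, 13 are the points (a1+a2)/3 and         *)
(* 2(a1+a2)/3 (the vertices of type [3^6]).  The faces are the translates   *)
(* of the 16 faces below (1 dodecagon, 3 squares, 12 triangles).            *)

Definition VK : Type := (Z * Z * 'I_14)%type.

Definition vx (a b : Z) (k : nat) : VK := (a, b, @inord 13 k).

Definition base_faces : seq (seq VK) :=
  [:: [:: vx 0 0 0; vx 0 0 1; vx 0 0 2; vx 0 0 3; vx 0 0 4; vx 0 0 5; vx 0 0 6; vx 0 0 7; vx 0 0 8; vx 0 0 9; vx 0 0 10; vx 0 0 11];
   [:: vx 0 0 11; vx 0 0 0; vx 1 0 5; vx 1 0 6];
   [:: vx 0 0 1; vx 0 0 2; vx 0 1 7; vx 0 1 8];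
   [:: vx 0 0 3; vx 0 0 4; vx (-1) 1 9; vx (-1) 1 10];
   [:: vx 0 0 12; vx 0 0 0; vx 1 0 5];
   [:: vx 0 0 12; vx 1 0 5; vx 1 0 4];
   [:: vx 0 0 12; vx 1 0 4; vx 0 1 9];
   [:: vx 0 0 12; vx 0 1 9; vx 0 1 8];
   [:: vx 0 0 12; vx 0 1 8; vx 0 0 1];
   [:: vx 0 0 12; vx 0 0 1; vx 0 0 0];
   [:: vx 0 0 13; vx 0 1 10; vx 1 0 3];
   [:: vx 0 0 13; vx 1 0 3; vx 1 0 2];
   [:: vx 0 0 13; vx 1 0 2; vx 1 1 7];
   [:: vx 0 0 13; vx 1 1 7; vx 1 1 6];
   [:: vx 0 0 13; vx 1 1 6; vx 0 1 11];
   [:: vx 0 0 13; vx 0 1 11; vx 0 1 10]].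

Definition shift (x y : Z) (v : VK) : VK :=
  ((v.1.1 + x)%Z, (v.1.2 + y)%Z, v.2).

Definition FK (s : seq VK) : Prop :=
  exists f, List.In f base_faces /\ exists (x y : Z) (n : nat),
    s = rot n (map (shift x y) f) \/ s = rot n (rev (map (shift x y) f)).

Definition aut_subgroup (Gamma : (VK -> VK) -> Prop) : Prop :=
  Gamma id /\
    (forall g, Gamma g -> map_aut FK g) /\
    (forall g h, Gamma g -> Gamma h -> Gamma (g \o h)) /\
    (forall g, Gamma g -> exists h, Gamma h /\ cancel g h /\ cancel h g).

Definition acts_freely (Gamma : (VK -> VK) -> Prop) : Prop :=
  (forall g v, Gamma g -> g v = v -> g = id) /\
    (forall g u v, Gamma g -> edge FK u v -> g u = v -> g v = u -> g = id) /\
    (forall g s, Gamma g -> FK s ->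
     (forall x, List.In x s -> List.In (g x) s) -> g = id).

Definition orbit (Gamma : (VK -> VK) -> Prop) (v : VK) : VK -> Prop :=
  fun w => exists g, Gamma g /\ g v = w.

Definition VX (Gamma : (VK -> VK) -> Prop) : Type :=
  { A : VK -> Prop | exists v, A = orbit Gamma v }.

Definition proj (Gamma : (VK -> VK) -> Prop) (v : VK) : VX Gamma :=
  exist _ (orbit Gamma v) (ex_intro _ v erefl).

Definition FX (Gamma : (VK -> VK) -> Prop) (t : seq (VX Gamma)) : Prop :=
  exists s, FK s /\ t = map (proj Gamma) s.
Arguments FX Gamma t : clear implicits.
Arguments proj Gamma v : clear implicits.

(* Main.v *)
Require Import Defs.
From Stdlib Require Import ZArith List Lia.
From Stdlib Require Import FunctionalExtensionality PropExtensionality ProofIrrelevance ClassicalEpsilon.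
From mathcomp Require Import all_boot.
From mathcomp Require Import ssrZ zify.
Set Implicit Arguments.
Unset Strict Implicit.
Unset Printing Implicit Defensive.
Notation shift := Defs.shift.
Notation orbit := Defs.orbit.

Lemma shiftK a b x y v : shift a b (shift x y v) = shift (x + a) (y + b) v.
Proof. case: v => [[p q] k]; rewrite /shift /=; congr (_,_,_); lia. Qed.

Lemma shift0 v : shift 0 0 v = v.
Proof. case: v => [[p q] k]; rewrite /shift /=; congr (_,_,_); lia. Qed.

Lemma shift_inj a b : injective (shift a b).
Proof.
move=> [[p q] k] [[p' q'] k']; rewrite /shift /= => [[e1 e2 ->]].
congr (_,_,_); lia.
Qed.

Lemma rot_any (T : Type) n (s : seq T) : exists m, m <= size s /\ rot n s = rot m s.
Proof.
case: (leqP (size s) n) => h.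
  by exists 0; rewrite rot0 rot_oversize.
by exists n; split => //; apply: ltnW.
Qed.

Lemma rot_rot_ex (T : Type) n m (s : seq T) : exists k, rot n (rot m s) = rot k s.
Proof.
have [m' [hm ->]] := rot_any m s.
have [n' [hn ->]] := rot_any n (rot m' s).
rewrite size_rot in hn.
rewrite rot_add_mod //; by eexists.
Qed.

Lemma rotr_ex (T : Type) n (s : seq T) : exists k, rotr n s = rot k s.
Proof. by exists (size s - n). Qed.

Lemma FK_rot s n : FK s -> FK (rot n s).
Proof.
move=> [f [hf [x [y [m [->|->]]]]]].
  have [k ->] := rot_rot_ex n m (map (shift x y) f); exists f; split => //; exists x, y, k; tauto.
have [k ->] := rot_rot_ex n m (rev (map (shift x y) f)); exists f; split => //; exists x, y, k; tauto.
Qed.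

Lemma FK_rev s : FK s -> FK (rev s).
Proof.
move=> [f [hf [x [y [m [->|->]]]]]]; exists f; split => //; exists x, y.
  rewrite rev_rot; have [k ->] := rotr_ex m (rev (map (shift x y) f)).
  by exists k; right.
rewrite rev_rot revK.
have [k ->] := rotr_ex m (map (shift x y) f).
by exists k; left.
Qed.

Lemma map_shift_comp a b x y (s : seq VK) :
  map (shift a b) (map (shift x y) s) = map (shift (x + a) (y + b)) s.
Proof. rewrite -map_comp; apply: eq_map => v /=; exact: shiftK. Qed.

Lemma FK_shift a b s : FK s -> FK (map (shift a b) s).
Proof.
move=> [f [hf [x [y [m [->|->]]]]]]; exists f; split => //;
exists (x + a)%Z, (y + b)%Z, m; rewrite map_rot ?map_rev map_shift_comp; tauto.
Qed.

Definition ord14 (k : nat) : 'I_14 := Ordinal (ltn_pmod k (isT : 0 < 14)).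
Definition vx' (a b : Z) (k : nat) : VK := (a, b, ord14 k).
Definition bdata : seq (seq (Z * Z * nat)) :=
  [:: [:: ((0)%Z, (0)%Z, 0); ((0)%Z, (0)%Z, 1); ((0)%Z, (0)%Z, 2); ((0)%Z, (0)%Z, 3); ((0)%Z, (0)%Z, 4); ((0)%Z, (0)%Z, 5); ((0)%Z, (0)%Z, 6); ((0)%Z, (0)%Z, 7); ((0)%Z, (0)%Z, 8); ((0)%Z, (0)%Z, 9); ((0)%Z, (0)%Z, 10); ((0)%Z, (0)%Z, 11)];
   [:: ((0)%Z, (0)%Z, 11); ((0)%Z, (0)%Z, 0); ((1)%Z, (0)%Z, 5); ((1)%Z, (0)%Z, 6)];
   [:: ((0)%Z, (0)%Z, 1); ((0)%Z, (0)%Z, 2); ((0)%Z, (1)%Z, 7); ((0)%Z, (1)%Z, 8)];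
   [:: ((0)%Z, (0)%Z, 3); ((0)%Z, (0)%Z, 4); ((-1)%Z, (1)%Z, 9); ((-1)%Z, (1)%Z, 10)];
   [:: ((0)%Z, (0)%Z, 12); ((0)%Z, (0)%Z, 0); ((1)%Z, (0)%Z, 5)];
   [:: ((0)%Z, (0)%Z, 12); ((1)%Z, (0)%Z, 5); ((1)%Z, (0)%Z, 4)];
   [:: ((0)%Z, (0)%Z, 12); ((1)%Z, (0)%Z, 4); ((0)%Z, (1)%Z, 9)];
   [:: ((0)%Z, (0)%Z, 12); ((0)%Z, (1)%Z, 9); ((0)%Z, (1)%Z, 8)];
   [:: ((0)%Z, (0)%Z, 12); ((0)%Z, (1)%Z, 8); ((0)%Z, (0)%Z, 1)];
   [:: ((0)%Z, (0)%Z, 12); ((0)%Z, (0)%Z, 1); ((0)%Z, (0)%Z, 0)];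
   [:: ((0)%Z, (0)%Z, 13); ((0)%Z, (1)%Z, 10); ((1)%Z, (0)%Z, 3)];
   [:: ((0)%Z, (0)%Z, 13); ((1)%Z, (0)%Z, 3); ((1)%Z, (0)%Z, 2)];
   [:: ((0)%Z, (0)%Z, 13); ((1)%Z, (0)%Z, 2); ((1)%Z, (1)%Z, 7)];
   [:: ((0)%Z, (0)%Z, 13); ((1)%Z, (1)%Z, 7); ((1)%Z, (1)%Z, 6)];
   [:: ((0)%Z, (0)%Z, 13); ((1)%Z, (1)%Z, 6); ((0)%Z, (1)%Z, 11)];
   [:: ((0)%Z, (0)%Z, 13); ((0)%Z, (1)%Z, 11); ((0)%Z, (1)%Z, 10)]].
Definition base' : seq (seq VK) := map (map (fun t => vx' t.1.1 t.1.2 t.2)) bdata.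

Lemma vx_vx' a b k : k < 14 -> vx a b k = vx' a b k.
Proof.
move=> hk; rewrite /vx /vx'; congr (_,_,_); apply: val_inj.
by rewrite /= inordK // modn_small.
Qed.

Lemma base_faces_eq : base_faces = base'.
Proof.
have -> : base_faces = map (map (fun t => vx t.1.1 t.1.2 t.2)) bdata by [].
rewrite /base'; apply/eq_in_map => l hl; apply/eq_in_map => t ht.
apply: vx_vx'.
have : all (all (fun t : Z * Z * nat => t.2 < 14)) bdata by [].
by move/allP/(_ _ hl)/allP/(_ _ ht).
Qed.

Lemma In_mem (T : eqType) (x : T) s : List.In x s -> x \in s.
Proof. elim: s => //= y s IH [->|h]; rewrite in_cons ?eqxx //= IH ?orbT //. Qed.

Lemma mem_In (T : eqType) (x : T) s : x \in s -> List.In x s.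
Proof. elim: s => //= y s IH; rewrite in_cons => /orP [/eqP ->|h]; [by left|right; exact: IH]. Qed.

Definition vdef : VK := vx' 0 0 0.
Definition base2 := base' ++ map rev base'.
Definition faces_at0 (k : 'I_14) : seq (seq VK) :=
  flatten [seq [seq rot i (map (shift (- (nth vdef f i).1.1) (- (nth vdef f i).1.2)) f)
               | i <- iota 0 (size f) & (nth vdef f i).2 == k] | f <- base2].
Definition faces_at (u : VK) := map (map (shift u.1.1 u.1.2)) (faces_at0 u.2).

Lemma FK_base2 s : FK s <-> exists f, f \in base2 /\ exists x y m, s = rot m (map (shift x y) f).
Proof.
rewrite /FK base_faces_eq.
split.
  move=> [f [hf [x [y [m [->|->]]]]]].
    by exists f; split; [rewrite mem_cat In_mem|exists x, y, m].
  exists (rev f); split; first by rewrite mem_cat map_f ?orbT // In_mem.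
  by exists x, y, m; rewrite map_rev.
move=> [f [hf [x [y [m ->]]]]].
move: hf; rewrite mem_cat => /orP [hf|/mapP [g hg ->]].
  by exists f; split; [apply: mem_In|exists x, y, m; left].
by exists g; split; [apply: mem_In|exists x, y, m; right; rewrite map_rev].
Qed.

Lemma faces_at_spec u r : FK (u :: r) -> (u :: r) \in faces_at u.
Proof.
move/FK_base2=> [f [hf [x [y [m e]]]]].
have [m' [hm e']] := rot_any m (map (shift x y) f).
rewrite e' in e.
have hsz : 0 < size f by move: (congr1 size e); rewrite size_rot size_map; case: (size f).
have [i [hi ei]] : exists i, i < size f /\ u :: r = rot i (map (shift x y) f).
  move: hm; rewrite size_map leq_eqVlt => /orP [/eqP em|hm].
    by exists 0; split => //; rewrite rot0 e em -(size_map (shift x y)) rot_size.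
  by exists m'; split.
set z := nth vdef f i.
have hu : u = shift x y z.
  move: (congr1 (head vdef) ei) => /= ->.
  rewrite /rot (drop_nth vdef) ?size_map //= (nth_map vdef) //.
rewrite /faces_at; apply/mapP.
exists (rot i (map (shift (- z.1.1) (- z.1.2)) f)).
  apply/flatten_mapP; exists f => //.
  apply/mapP; exists i => //; rewrite mem_filter mem_iota /= add0n hi andbT.
  by rewrite hu.
rewrite ei map_rot map_shift_comp; congr (rot i (map (shift _ _) f)).
  by rewrite hu /z; case: (nth vdef f i) => [[p q] k] /=; lia.
by rewrite hu /z; case: (nth vdef f i) => [[p q] k] /=; lia.
Qed.

Lemma faces_at_FK u l : l \in faces_at u -> FK l.
Proof.
rewrite /faces_at => /mapP [l' /flatten_mapP [f hf /mapP [i _ ->]] ->].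
rewrite map_rot map_shift_comp; apply/FK_base2.
by exists f; split => //; do 3 eexists.
Qed.

Lemma faces_at_shift a b u :
  faces_at (shift a b u) = map (map (shift a b)) (faces_at u).
Proof.
rewrite /faces_at -map_comp; case: u => [[p q] k] /=.
apply: eq_map => l /=; rewrite map_shift_comp; congr (map (shift _ _) l); lia.
Qed.

Definition Fixset (h : VK -> VK) (S : seq VK) := forall z, z \in S -> h z = z.

Definition ck_step (S : seq VK) (u v : VK) (rt : seq VK) : bool :=
  [&& u \in S, v \in S, (u :: v :: rt) \in faces_at u &
   all (fun l => if l is u' :: v' :: r then ((u' == u) && (v' == v)) ==>
                   ((r == rt) || all (fun z => z \in S) r) else true) (faces_at u)].

Lemma map_fix (h : VK -> VK) l : map h l = l -> Fixset h l.
Proof.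
elim: l => //= a l IH [e1 e2] z; rewrite in_cons => /orP [/eqP ->|hz] //.
exact: IH.
Qed.

Lemma map_aut_inj h : map_aut FK h -> injective h.
Proof. by move=> [/bij_inj]. Qed.

Lemma step h S u v rt : map_aut FK h -> Fixset h S -> ck_step S u v rt ->
  Fixset h (S ++ rt).
Proof.
move=> ha hS /and4P [hu hv hin /allP hall].
have hFK : FK (u :: v :: rt) := faces_at_FK hin.
have : FK (map h (u :: v :: rt)) by case: ha => _ /(_ (u :: v :: rt)) [/(_ hFK)].
rewrite /= (hS _ hu) (hS _ hv) => /faces_at_spec hin'.
have := hall _ hin'; rewrite !eqxx /= => /orP [/eqP e|/allP hsub].
  move=> z; rewrite mem_cat => /orP [/hS //|]; exact: map_fix.
have e : map h rt = rt.
  apply: (inj_map (map_aut_inj ha)).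
  have e2 : map h (map h rt) = map id (map h rt).
    by apply/eq_in_map => z hz; apply: hS; apply: hsub.
  by rewrite e2 map_id.
move=> z; rewrite mem_cat => /orP [/hS //|]; exact: map_fix.
Qed.

Fixpoint ck_chain (S : seq VK) (st : seq (VK * VK * seq VK)) : bool :=
  match st with
  | [::] => true
  | (u, v, rt) :: st' => ck_step S u v rt && ck_chain (S ++ rt) st'
  end.

Fixpoint chain_set (S : seq VK) (st : seq (VK * VK * seq VK)) : seq VK :=
  match st with
  | [::] => S
  | (u, v, rt) :: st' => chain_set (S ++ rt) st'
  end.

Lemma chain h S st : map_aut FK h -> Fixset h S -> ck_chain S st -> Fixset h (chain_set S st).
Proof.
move=> ha; elim: st S => //= [[[u v] rt] st IH] S hS /andP [h1 h2].
apply: IH => //; exact: step h1.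
Qed.


Definition D0 : seq VK := [seq vx' 0 0 i | i <- iota 0 12].
Definition Dxy x y := map (shift x y) D0.
Definition steps1 : seq (VK * VK * seq VK) :=
[:: (vx' (0) (0) 0, vx' (0) (0) 11, [:: vx' (1) (0) 6; vx' (1) (0) 5]);
 (vx' (0) (0) 0, vx' (1) (0) 5, [:: vx' (0) (0) 12]);
 (vx' (0) (0) 1, vx' (0) (0) 2, [:: vx' (0) (1) 7; vx' (0) (1) 8]);
 (vx' (0) (0) 2, vx' (0) (1) 7, [:: vx' (-1) (0) 13]);
 (vx' (0) (0) 3, vx' (0) (0) 4, [:: vx' (-1) (1) 9; vx' (-1) (1) 10]);
 (vx' (0) (0) 4, vx' (-1) (1) 9, [:: vx' (-1) (0) 12]);
 (vx' (0) (0) 5, vx' (0) (0) 6, [:: vx' (-1) (0) 11; vx' (-1) (0) 0]);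
 (vx' (0) (0) 6, vx' (-1) (0) 11, [:: vx' (-1) (-1) 13]);
 (vx' (0) (0) 7, vx' (0) (0) 8, [:: vx' (0) (-1) 1; vx' (0) (-1) 2]);
 (vx' (0) (0) 8, vx' (0) (-1) 1, [:: vx' (0) (-1) 12]);
 (vx' (0) (0) 9, vx' (0) (0) 10, [:: vx' (1) (-1) 3; vx' (1) (-1) 4]);
 (vx' (0) (0) 10, vx' (1) (-1) 3, [:: vx' (0) (-1) 13]);
 (vx' (1) (0) 6, vx' (0) (-1) 13, [:: vx' (1) (0) 7]);
 (vx' (1) (0) 6, vx' (1) (0) 7, [:: vx' (1) (0) 8; vx' (1) (0) 9; vx' (1) (0) 10; vx' (1) (0) 11; vx' (1) (0) 0; vx' (1) (0) 1; vx' (1) (0) 2; vx' (1) (0) 3; vx' (1) (0) 4; vx' (1) (0) 5]);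
 (vx' (0) (0) 12, vx' (1) (0) 4, [:: vx' (0) (1) 9]);
 (vx' (0) (1) 7, vx' (0) (1) 8, [:: vx' (0) (1) 9; vx' (0) (1) 10; vx' (0) (1) 11; vx' (0) (1) 0; vx' (0) (1) 1; vx' (0) (1) 2; vx' (0) (1) 3; vx' (0) (1) 4; vx' (0) (1) 5; vx' (0) (1) 6]);
 (vx' (-1) (0) 13, vx' (0) (1) 6, [:: vx' (-1) (1) 11]);
 (vx' (-1) (1) 9, vx' (-1) (1) 10, [:: vx' (-1) (1) 11; vx' (-1) (1) 0; vx' (-1) (1) 1; vx' (-1) (1) 2; vx' (-1) (1) 3; vx' (-1) (1) 4; vx' (-1) (1) 5; vx' (-1) (1) 6; vx' (-1) (1) 7; vx' (-1) (1) 8]);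
 (vx' (-1) (0) 12, vx' (-1) (1) 8, [:: vx' (-1) (0) 1]);
 (vx' (-1) (0) 11, vx' (-1) (0) 0, [:: vx' (-1) (0) 1; vx' (-1) (0) 2; vx' (-1) (0) 3; vx' (-1) (0) 4; vx' (-1) (0) 5; vx' (-1) (0) 6; vx' (-1) (0) 7; vx' (-1) (0) 8; vx' (-1) (0) 9; vx' (-1) (0) 10]);
 (vx' (-1) (-1) 13, vx' (-1) (0) 10, [:: vx' (0) (-1) 3]);
 (vx' (0) (-1) 1, vx' (0) (-1) 2, [:: vx' (0) (-1) 3; vx' (0) (-1) 4; vx' (0) (-1) 5; vx' (0) (-1) 6; vx' (0) (-1) 7; vx' (0) (-1) 8; vx' (0) (-1) 9; vx' (0) (-1) 10; vx' (0) (-1) 11; vx' (0) (-1) 0]);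
 (vx' (0) (-1) 12, vx' (0) (-1) 0, [:: vx' (1) (-1) 5]);
 (vx' (1) (-1) 3, vx' (1) (-1) 4, [:: vx' (1) (-1) 5; vx' (1) (-1) 6; vx' (1) (-1) 7; vx' (1) (-1) 8; vx' (1) (-1) 9; vx' (1) (-1) 10; vx' (1) (-1) 11; vx' (1) (-1) 0; vx' (1) (-1) 1; vx' (1) (-1) 2]);
 (vx' (1) (0) 8, vx' (1) (-1) 1, [:: vx' (1) (-1) 12]);
 (vx' (1) (0) 9, vx' (1) (0) 10, [:: vx' (2) (-1) 3; vx' (2) (-1) 4]);
 (vx' (1) (0) 10, vx' (2) (-1) 3, [:: vx' (1) (-1) 13]);
 (vx' (1) (0) 11, vx' (1) (0) 0, [:: vx' (2) (0) 5; vx' (2) (0) 6]);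
 (vx' (1) (0) 0, vx' (2) (0) 5, [:: vx' (1) (0) 12]);
 (vx' (1) (0) 1, vx' (1) (0) 2, [:: vx' (1) (1) 7; vx' (1) (1) 8]);
 (vx' (1) (0) 2, vx' (1) (1) 7, [:: vx' (0) (0) 13])].

Lemma steps1_ok : ck_chain D0 steps1 && all (fun z => z \in chain_set D0 steps1)
  (Dxy 1 0 ++ Dxy (-1) 0 ++ Dxy 0 1 ++ Dxy 0 (-1) ++ [:: vx' 0 0 12; vx' 0 0 13]).
Proof. vm_compute. reflexivity. Qed.

Lemma map_shift0 s : map (shift 0 0) s = s.
Proof. by elim: s => //= v s ->; rewrite shift0. Qed.

Lemma map_aut_comp f g : map_aut FK f -> map_aut FK g -> map_aut FK (f \o g).
Proof.
move=> [bf hf] [bg hg]; split; first exact: bij_comp.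
by move=> s; rewrite map_comp -hf -hg.
Qed.

Lemma shift_cancel x y v : shift (-x) (-y) (shift x y v) = v.
Proof. rewrite shiftK -[RHS]shift0; congr shift; lia. Qed.
Lemma shift_cancel' x y v : shift x y (shift (-x) (-y) v) = v.
Proof. rewrite shiftK -[RHS]shift0; congr shift; lia. Qed.

Lemma map_aut_shift x y : map_aut FK (shift x y).
Proof.
split.
  by exists (shift (-x) (-y)) => v; [exact: shift_cancel|exact: shift_cancel'].
move=> s; split; first exact: FK_shift.
move/(FK_shift (-x) (-y)); rewrite map_shift_comp.
have -> : (x + - x = 0)%Z by lia.
have -> : (y + - y = 0)%Z by lia.
by rewrite map_shift0.
Qed.

Definition conjh (h : VK -> VK) x y := shift (-x) (-y) \o h \o shift x y.

Lemma conjh_aut h x y : map_aut FK h -> map_aut FK (conjh h x y).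
Proof.
move=> ha; rewrite /conjh.
apply: (map_aut_comp (f := shift (-x) (-y) \o h)); last exact: map_aut_shift.
apply: map_aut_comp => //; exact: map_aut_shift.
Qed.


Lemma Fixset_conj h x y S : Fixset (conjh h x y) S -> Fixset h (map (shift x y) S).
Proof.
move=> hS z /mapP [z0 hz0 ->].
have := hS z0 hz0; rewrite /conjh /= => e.
by rewrite -{2}e shift_cancel'.
Qed.

Lemma conj_Fixset h x y S : Fixset h (map (shift x y) S) -> Fixset (conjh h x y) S.
Proof.
move=> hS z hz; rewrite /conjh /= hS ?shift_cancel //; exact: map_f.
Qed.

Lemma fix_local h : map_aut FK h -> Fixset h D0 ->
  [/\ Fixset h (Dxy 1 0), Fixset h (Dxy (-1) 0), Fixset h (Dxy 0 1), Fixset h (Dxy 0 (-1))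
    & Fixset h [:: vx' 0 0 12; vx' 0 0 13]].
Proof.
move=> ha h0; have /andP [hc hs] := steps1_ok.
have hF := chain ha h0 hc.
have hsub : forall T, {subset T <= chain_set D0 steps1} -> Fixset h T.
  by move=> T hT z /hT; apply: hF.
move/allP: hs => hs.
by split; apply: hsub => z hz; apply: hs; rewrite !mem_cat hz ?orbT.
Qed.

Lemma Dxy_shift x y a b : Dxy (x + a) (y + b) = map (shift x y) (Dxy a b).
Proof. rewrite /Dxy map_shift_comp; congr (map (shift _ _) D0); lia. Qed.

Lemma fix_move h x y : map_aut FK h -> Fixset h (Dxy x y) ->
  [/\ Fixset h (Dxy (x + 1) y), Fixset h (Dxy (x - 1) y), Fixset h (Dxy x (y + 1)),
      Fixset h (Dxy x (y - 1)) & Fixset h (map (shift x y) [:: vx' 0 0 12; vx' 0 0 13])].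
Proof.
move=> ha hD.
have hD0 : Fixset (conjh h x y) D0.
  by apply: conj_Fixset; exact: hD.
have [h1 h2 h3 h4 h5] := fix_local (conjh_aut x y ha) hD0.
split.
- have -> : Dxy (x + 1) y = map (shift x y) (Dxy 1 0) by rewrite -Dxy_shift; congr Dxy; lia.
  exact: Fixset_conj.
- have -> : Dxy (x - 1) y = map (shift x y) (Dxy (-1) 0) by rewrite -Dxy_shift; congr Dxy; lia.
  exact: Fixset_conj.
- have -> : Dxy x (y + 1) = map (shift x y) (Dxy 0 1) by rewrite -Dxy_shift; congr Dxy; lia.
  exact: Fixset_conj.
- have -> : Dxy x (y - 1) = map (shift x y) (Dxy 0 (-1)) by rewrite -Dxy_shift; congr Dxy; lia.
  exact: Fixset_conj.
- exact: Fixset_conj.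
Qed.

Lemma Z_ind2 (P : Z -> Prop) : P 0%Z -> (forall x, P x -> P (x + 1)%Z) ->
  (forall x, P x -> P (x - 1)%Z) -> forall x, P x.
Proof.
move=> h0 hS hP; exact: (Z.peano_ind P).
Qed.

Lemma rigid h : map_aut FK h -> Fixset h D0 -> forall v, h v = v.
Proof.
move=> ha h0.
have hall : forall x y, Fixset h (Dxy x y).
  have h00 : Fixset h (Dxy 0 0) by rewrite /Dxy map_shift0.
  have hx : forall x, Fixset h (Dxy x 0).
    apply: Z_ind2 => // x hx; by case: (fix_move ha hx).
  move=> x; apply: Z_ind2 => // y hy; by case: (fix_move ha hy).
case=> [[a b] k].
have [hk|hk] := ltnP k 12.
  apply: (hall a b); apply/mapP; exists (vx' 0 0 k).
    by apply/mapP; exists (val k); rewrite ?mem_iota //.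
  rewrite /vx' /shift /=; congr (_,_,_); try lia.
  by apply: val_inj; rewrite /= modn_small.
case: (fix_move ha (hall a b)) => _ _ _ _ h5.
have hk' : (k == ord14 12) || (k == ord14 13).
  case: k hk => m hm /= hk.
  have : m = 12 \/ m = 13 by lia.
  by case=> e; apply/orP; [left|right]; apply/eqP/val_inj; rewrite /= e.
have e : forall j, (a, b, ord14 j) = shift a b (vx' 0 0 j).
  move=> j; rewrite /shift /vx' /=; congr (_,_,_); lia.
case/orP: hk' => /eqP ->; rewrite e; apply: h5; rewrite map_f // !inE eqxx ?orbT //.
Qed.

Definition Rv (v : VK) : VK :=
  let: (a, b, k) := v in
  if val k < 12 then ((- b)%Z, (a + b)%Z, ord14 ((val k + 2) %% 12))
  else if val k == 12 then ((- b - 1)%Z, (a + b)%Z, ord14 13)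
  else ((- b - 1)%Z, (a + b + 1)%Z, ord14 12).

Definition Mv (v : VK) : VK :=
  let: (a, b, k) := v in
  if val k < 12 then ((a + b)%Z, (- b)%Z, ord14 (11 - val k))
  else if val k == 12 then ((a + b)%Z, (- b - 1)%Z, ord14 13)
  else ((a + b + 1)%Z, (- b - 1)%Z, ord14 12).

Lemma Rv_shift x y v : Rv (shift x y v) = shift (- y) (x + y) (Rv v).
Proof.
case: v => [[a b] k]; rewrite /Rv /shift /=.
case: ifP => _; last case: ifP => _; congr (_,_,_); rewrite /=; lia.
Qed.

Lemma Mv_shift x y v : Mv (shift x y v) = shift (x + y) (- y) (Mv v).
Proof.
case: v => [[a b] k]; rewrite /Mv /shift /=.
case: ifP => _; last case: ifP => _; congr (_,_,_); rewrite /=; lia.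
Qed.

Lemma decomp v : v = shift v.1.1 v.1.2 (vx' 0 0 (val v.2)).
Proof.
case: v => [[a b] k]; rewrite /shift /vx' /=; congr (_,_,_); try lia.
by apply: val_inj; rewrite /= modn_small.
Qed.

Lemma base_check (P : VK -> Prop) :
  (forall k, k < 14 -> P (vx' 0 0 k)) -> forall k : 'I_14, P (vx' 0 0 (val k)).
Proof. by move=> h k; apply: (h _ (ltn_ord k)). Qed.

Lemma FK_map_gen (sg : VK -> VK) (L : Z -> Z -> Z * Z) :
  (forall x y v, sg (shift x y v) = shift (L x y).1 (L x y).2 (sg v)) ->
  all (fun f => map sg f \in faces_at (head vdef (map sg f))) base2 ->
  forall s, FK s -> FK (map sg s).
Proof.
move=> hL /allP hb s /FK_base2 [f [hf [x [y [m ->]]]]].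
rewrite map_rot -map_comp.
have -> : map (sg \o shift x y) f = map (shift (L x y).1 (L x y).2) (map sg f).
  by rewrite -map_comp; apply: eq_map => v /=; rewrite hL.
apply: FK_rot; apply: FK_shift.
have := hb f hf; case e : (map sg f) => [|z r].
  by move: (congr1 size e) (hf); rewrite size_map => /eqP; rewrite size_eq0 => /eqP -> .
by move/faces_at_FK.
Qed.

Lemma R_base : all (fun f => map Rv f \in faces_at (head vdef (map Rv f))) base2.
Proof. by vm_compute. Qed.
Lemma M_base : all (fun f => map Mv f \in faces_at (head vdef (map Mv f))) base2.
Proof. by vm_compute. Qed.
Lemma R6_base : all (fun k => iter 6 Rv (vx' 0 0 k) == vx' 0 0 k) (iota 0 14).
Proof. by vm_compute. Qed.
Lemma M2_base : all (fun k => Mv (Mv (vx' 0 0 k)) == vx' 0 0 k) (iota 0 14).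
Proof. by vm_compute. Qed.

Definition LR (p : Z * Z) : Z * Z := ((- p.2)%Z, (p.1 + p.2)%Z).

Lemma iterR_shift m x y v :
  iter m Rv (shift x y v) = shift (iter m LR (x, y)).1 (iter m LR (x, y)).2 (iter m Rv v).
Proof.
elim: m => //= m ->; rewrite Rv_shift; by case: (iter m LR (x, y)).
Qed.

Lemma R6 v : iter 6 Rv v = v.
Proof.
rewrite [in LHS](decomp v) iterR_shift.
have /allP h := R6_base.
rewrite (eqP (h (val v.2) _)); last by rewrite mem_iota /=.
rewrite [in RHS](decomp v); case: v => [[a b] k] /=; congr shift; lia.
Qed.

Lemma M2 v : Mv (Mv v) = v.
Proof.
rewrite [in LHS](decomp v) !Mv_shift.
have /allP h := M2_base.
rewrite (eqP (h (val v.2) _)); last by rewrite mem_iota /=.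
rewrite [in RHS](decomp v); case: v => [[a b] k] /=; congr shift; lia.
Qed.

Lemma FK_R s : FK s -> FK (map Rv s).
Proof. exact: (@FK_map_gen Rv (fun x y => (- y, x + y)%Z) Rv_shift R_base s). Qed.
Lemma FK_M s : FK s -> FK (map Mv s).
Proof. exact: (@FK_map_gen Mv (fun x y => (x + y, - y)%Z) Mv_shift M_base s). Qed.

Lemma FK_Rn n s : FK s -> FK (map (iter n Rv) s).
Proof.
elim: n s => [|n IH] s h /=; first by rewrite map_id.
rewrite (eq_map (fun v => erefl (Rv (iter n Rv v)))) map_comp; apply: FK_R; exact: IH.
Qed.

Lemma map_aut_R : map_aut FK Rv.
Proof.
split.
  exists (iter 5 Rv) => v; first by rewrite -iterSr R6.
  by rewrite -iterS R6.
move=> s; split; first exact: FK_R.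
move/(FK_Rn 5); rewrite -map_comp (eq_map (fun v => esym (iterSr 5 Rv v))).
rewrite (eq_map R6) map_id //.
Qed.

Lemma map_aut_M : map_aut FK Mv.
Proof.
split; first by exists Mv => v; rewrite M2.
move=> s; split; first exact: FK_M.
by move/FK_M; rewrite -map_comp (eq_map M2) map_id.
Qed.

Definition pm (m : nat) (e : bool) (v : VK) : VK := iter m Rv (if e then Mv v else v).

Lemma map_aut_id : map_aut FK id.
Proof. by split; [exists id|move=> s; rewrite map_id]. Qed.

Lemma map_aut_pm m e : map_aut FK (pm m e).
Proof.
have hR : forall n, map_aut FK (iter n Rv).
  elim=> [|n IH]; first exact: map_aut_id.
  have -> : iter n.+1 Rv = Rv \o iter n Rv by [].
  exact: map_aut_comp map_aut_R IH.
case: e.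
  have -> : pm m true = iter m Rv \o Mv by [].
  exact: map_aut_comp (hR m) map_aut_M.
have -> : pm m false = iter m Rv by [].
exact: hR.
Qed.

Lemma map_aut_inv f : map_aut FK f -> exists f', map_aut FK f' /\ cancel f f' /\ cancel f' f.
Proof.
move=> [[f' c1 c2] hf]; exists f'; split => //; split.
  by exists f.
move=> s; rewrite [X in FK X <-> _](_ : s = map f (map f' s)); last first.
  by rewrite -map_comp (eq_map c2) map_id.
by rewrite -hf.
Qed.

Lemma agree_D0 g1 g2 : map_aut FK g1 -> map_aut FK g2 ->
  {in D0, g1 =1 g2} -> forall v, g1 v = g2 v.
Proof.
move=> h1 h2 hag.
have [f' [ha' [c1 c2]]] := map_aut_inv h2.
have hh := map_aut_comp ha' h1.
have hfix : Fixset (f' \o g1) D0 by move=> z hz /=; rewrite hag // c1.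
move=> v; have := rigid hh hfix v => /= e.
by rewrite -[LHS]c2 e.
Qed.

Definition P12 : seq (nat * bool) := [seq (m, e) | m <- iota 0 6, e <- [:: false; true]].
Definition badl (l : seq VK) : bool :=
  ~~ has (fun q => (size q == 4) && (nth vdef q 1 == nth vdef l 0)) (faces_at (nth vdef l 11)).

Lemma class_check : all (fun k => all (fun l => (size l == 12) ==>
   (has (fun me => l == map (pm me.1 me.2) D0) P12 || badl l)) (faces_at0 (ord14 k))) (iota 0 14).
Proof. by vm_compute. Qed.

Definition Q0 : seq VK := [:: vx' 0 0 11; vx' 0 0 0; vx' 1 0 5; vx' 1 0 6].

Lemma FK_D0 : FK D0.
Proof. apply: (@faces_at_FK (vx' 0 0 0)); by vm_compute. Qed.
Lemma FK_Q0 : FK Q0.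
Proof. apply: (@faces_at_FK (vx' 0 0 11)); by vm_compute. Qed.

Lemma aut_FK g s : map_aut FK g -> FK s -> FK (map g s).
Proof. by move=> [_ h] /h. Qed.

Lemma ord14_val (k : 'I_14) : ord14 (val k) = k.
Proof. by apply: val_inj; rewrite /= modn_small. Qed.

Lemma classify g : map_aut FK g ->
  exists a b m e, m < 6 /\ forall v, g v = shift a b (pm m e v).
Proof.
move=> ha.
set w := g (vx' 0 0 0).
have hD : FK (map g D0) := aut_FK ha FK_D0.
have : map g D0 \in faces_at w by move: hD; rewrite /D0 /=; exact: faces_at_spec.
rewrite /faces_at => /mapP [l hl el].
have hsz : size l = 12 by rewrite -(size_map (shift w.1.1 w.1.2)) -el size_map.
have /allP hc := class_check.
have := hc (val w.2); rewrite mem_iota ltn_ord ord14_val => /(_ isT) /allP /(_ l hl).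
rewrite hsz eqxx implyTb; case/orP => [hh|hbad].
  have [[m e] hme /eqP el2] := hasP hh.
  exists w.1.1, w.1.2, m, e; split.
  by move: hme; rewrite /P12 => /allpairsP [[m' e'] [hm' _ [-> _]]]; rewrite mem_iota in hm'.
    apply: agree_D0 => //.
      apply: map_aut_comp; [exact: map_aut_shift|exact: map_aut_pm].
    apply/eq_in_map; by rewrite el el2 -map_comp.
exfalso; move/negP: hbad; apply.
have hQ : FK (map g Q0) := aut_FK ha FK_Q0.
have e11 : g (vx' 0 0 11) = shift w.1.1 w.1.2 (nth vdef l 11).
  by rewrite -(nth_map vdef vdef) ?hsz // -el (nth_map vdef) //.
have e0 : g (vx' 0 0 0) = shift w.1.1 w.1.2 (nth vdef l 0).
  by rewrite -(nth_map vdef vdef) ?hsz // -el (nth_map vdef) //.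
have : map g Q0 \in faces_at (g (vx' 0 0 11)) by apply: faces_at_spec.
rewrite e11 faces_at_shift => /mapP [q hq eq].
apply/hasP; exists q => //.
have hsq : size q = 4 by rewrite -(size_map (shift w.1.1 w.1.2)) -eq size_map.
rewrite hsq eqxx /=; apply/eqP; apply: (@shift_inj w.1.1 w.1.2).
by rewrite -e0 -(nth_map vdef vdef) ?hsq // -eq.
Qed.

Definition adjb (l : seq VK) u v := has (fun n => take 2 (rot n l) == [:: u; v]) (iota 0 (size l)).

Lemma adjbP l u v : adjb l u v -> adj_in l u v.
Proof.
move/hasP=> [n _ /eqP e]; exists n, (drop 2 (rot n l)).
by rewrite -[LHS](cat_take_drop 2) e.
Qed.

Lemma adj_in_map (f : VK -> VK) l u v : adj_in l u v -> adj_in (map f l) (f u) (f v).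
Proof. by move=> [n [t e]]; exists n, (map f t); rewrite -map_rot e. Qed.

Lemma adj_in_map' (T T' : Type) (f : T -> T') l u v : adj_in l u v -> adj_in (map f l) (f u) (f v).
Proof. by move=> [n [t e]]; exists n, (map f t); rewrite -map_rot e. Qed.

Lemma adj_in_rev (T : Type) (l : seq T) u v : adj_in l u v -> adj_in (rev l) v u.
Proof.
move=> [n [t e]].
have e2 : rotr n (rev l) = rev t ++ [:: v; u].
  by rewrite -rev_rot e /= rev_cons rev_cons -cats1 -cats1 -catA.
have [k1 e3] := rotr_ex n (rev l).
have [k2 e4] := rot_rot_ex (size (rev t)) k1 (rev l).
exists k2, (rev t); rewrite -e4 -e3 e2 rot_size_cat //.
Qed.

Definition HQ1 (Q : seq VK -> Prop) := forall s, FK s -> (Q s \/ Q (rev s)) /\ ~ (Q s /\ Q (rev s)).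
Definition HQ2 (Q : seq VK -> Prop) := forall s s' u v, Q s -> Q s' -> adj_in s u v -> adj_in s' u v ->
  size s = size s'.

Lemma flip Q s t u v : HQ1 Q -> HQ2 Q -> Q s -> FK t -> adj_in s u v -> adj_in t u v ->
  size s <> size t -> Q (rev t).
Proof.
move=> h1 h2 hs ht a1 a2 hsz; have [[h|h] _] := h1 t ht => //.
by case: hsz; apply: (h2 _ _ u v).
Qed.

Definition dir_ck (sq0 : seq VK) u0 v0 u1 v1 dx dy :=
  [&& sq0 \in faces_at (head vdef sq0), adjb D0 u0 v0, adjb sq0 u0 v0,
      adjb (rev sq0) u1 v1, adjb (rev (Dxy dx dy)) u1 v1 & size sq0 == 4].

Lemma FK_Dxy x y : FK (Dxy x y).
Proof. apply: FK_shift; exact: FK_D0. Qed.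

Lemma prop_dir Q sq0 u0 v0 u1 v1 dx dy : HQ1 Q -> HQ2 Q -> dir_ck sq0 u0 v0 u1 v1 dx dy ->
  forall x y, Q (Dxy x y) -> Q (Dxy (x + dx) (y + dy)).
Proof.
move=> h1 h2 /andP [hf /and5P [a1 a2 a3 a4 /eqP hs]] x y hD.
have hsq : FK (map (shift x y) sq0).
  apply: FK_shift; move: hf; case: (sq0) hs => // z r _; exact: faces_at_FK.
have hr : Q (rev (map (shift x y) sq0)).
  have a1' : adj_in (Dxy x y) (shift x y u0) (shift x y v0) := adj_in_map (shift x y) (adjbP a1).
  refine (flip h1 h2 hD hsq a1' (adj_in_map (shift x y) (adjbP a2)) _).
  by rewrite size_map hs.
have hD' : FK (Dxy (x + dx) (y + dy)) := FK_Dxy _ _.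
rewrite -[Dxy _ _]revK; refine (flip h1 h2 hr (FK_rev hD') _ _ _).
- rewrite -map_rev; exact: adj_in_map (adjbP a3).
- rewrite Dxy_shift -map_rev; exact: adj_in_map (adjbP a4).
- by rewrite size_rev size_map hs size_rev size_map.
Qed.

Lemma dir_cks :
  [/\ dir_ck Q0 (vx' 0 0 11) (vx' 0 0 0) (vx' 1 0 6) (vx' 1 0 5) 1 0,
      dir_ck (map (shift (-1) 0) Q0) (vx' 0 0 5) (vx' 0 0 6) (vx' (-1) 0 0) (vx' (-1) 0 11) (-1) 0,
      dir_ck [:: vx' 0 0 1; vx' 0 0 2; vx' 0 1 7; vx' 0 1 8] (vx' 0 0 1) (vx' 0 0 2) (vx' 0 1 8) (vx' 0 1 7) 0 1
    & dir_ck [:: vx' 0 (-1) 1; vx' 0 (-1) 2; vx' 0 0 7; vx' 0 0 8] (vx' 0 0 7) (vx' 0 0 8) (vx' 0 (-1) 2) (vx' 0 (-1) 1) 0 (-1)].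
Proof. by split; vm_compute. Qed.

Lemma propagate Q : HQ1 Q -> HQ2 Q -> Q D0 -> forall x y, Q (Dxy x y).
Proof.
move=> h1 h2 h0.
have [c1 c2 c3 c4] := dir_cks.
have h00 : Q (Dxy 0 0) by rewrite /Dxy map_shift0.
have hx : forall x, Q (Dxy x 0).
  apply: Z_ind2 => // x hx.
    by have := prop_dir h1 h2 c1 hx; rewrite Z.add_0_r.
  by have := prop_dir h1 h2 c2 hx; rewrite Z.add_0_r.
move=> x; apply: Z_ind2 => // y hy.
  by have := prop_dir h1 h2 c3 hy; rewrite Z.add_0_r.
by have := prop_dir h1 h2 c4 hy; rewrite Z.add_0_r.
Qed.

Definition HQ3 (Q : seq VK -> Prop) := forall n t, Q (rot n t) -> Q t.

Lemma refl_fact : all (fun m => has (fun n => map (pm m true) D0 == rot n (rev D0)) (iota 0 12)) (iota 0 6).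
Proof. by vm_compute. Qed.

Lemma contra_Q Q g a b m : HQ1 Q -> HQ2 Q -> HQ3 Q -> (forall s, Q s -> Q (map g s)) -> Q D0 ->
  m < 6 -> (forall v, g v = shift a b (pm m true v)) -> False.
Proof.
move=> h1 h2 h3 h4 h0 hm hg.
have hD := propagate h1 h2 h0 a b.
have hin : m \in iota 0 6 by rewrite mem_iota.
have hh := (allP refl_fact) m hin.
have [n _ /eqP en] := hasP hh.
have : Q (map g D0) := h4 _ h0.
rewrite (eq_map hg) map_comp en map_rot map_rev => /h3 hr.
by have [_ []] := h1 _ (FK_Dxy a b).
Qed.

Section Gam.
Variable Gamma : (VK -> VK) -> Prop.
Hypothesis hsub : aut_subgroup Gamma.

Lemma gam_aut g : Gamma g -> map_aut FK g.
Proof. by case: hsub => _ [h _] /h. Qed.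

Lemma gam_comp g h : Gamma g -> Gamma h -> Gamma (g \o h).
Proof. by case: hsub => _ [_ [h3 _]]; apply: h3. Qed.

Lemma gam_inv g : Gamma g -> exists h, Gamma h /\ cancel g h /\ cancel h g.
Proof. by case: hsub => _ [_ [_ h4]]; apply: h4. Qed.

Lemma gam_id : Gamma id.
Proof. by case: hsub. Qed.

Lemma orbit_g g v : Gamma g -> orbit Gamma (g v) = orbit Gamma v.
Proof.
move=> hg; apply: functional_extensionality => w; apply: propositional_extensionality.
split.
  move=> [h [hh <-]]; exists (h \o g); split => //; exact: gam_comp.
move=> [h [hh <-]]; have [gi [hgi [c1 c2]]] := gam_inv hg.
exists (h \o gi); split; first exact: gam_comp.
by rewrite /= c1.
Qed.

Lemma proj_eq u v : orbit Gamma u = orbit Gamma v -> proj Gamma u = proj Gamma v.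
Proof.
rewrite /proj => e.
move: (ex_intro _ u (erefl (orbit Gamma u))) (ex_intro _ v (erefl (orbit Gamma v))).
rewrite e => p1 p2; congr exist; exact: proof_irrelevance.
Qed.

Lemma proj_g g v : Gamma g -> proj Gamma (g v) = proj Gamma v.
Proof. by move=> hg; apply: proj_eq; apply: orbit_g. Qed.

Lemma no_reflection g a b m : orientable (FX Gamma) -> Gamma g -> m < 6 ->
  (forall v, g v = shift a b (pm m true v)) -> False.
Proof.
move=> [O [hO1 [hO2 [hO3 hO4]]]] hg hm hgv.
pose OK s := FK s /\ O (map (proj Gamma) s).
have k1 : HQ1 OK.
  move=> s hs.
  have hX : FX Gamma (map (proj Gamma) s) by exists s.
  have [oo no] := hO3 _ hX; split.
    case: oo => o; [by left|right; split; [exact: FK_rev|by rewrite map_rev]].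
  by move=> [[_ o1] [_ o2]]; apply: no; split => //; rewrite -map_rev.
have k2 : HQ2 OK.
  move=> s s' u v [_ o] [_ o'] a1 a2.
  have [n e] := hO4 _ _ _ _ o o' (adj_in_map' (proj Gamma) a1) (adj_in_map' (proj Gamma) a2).
  by rewrite -(size_map (proj Gamma) s) -(size_map (proj Gamma) s') e size_rot.
have k3 : HQ3 OK.
  move=> n t [f o]; split.
    have [k e] := rotr_ex n (rot n t); rewrite -(rotK n t) e; exact: FK_rot.
  have [k e] := rotr_ex n (rot n (map (proj Gamma) t)).
  rewrite -(rotK n (map (proj Gamma) t)) e; apply: hO2; by rewrite -map_rot.
have k4 : forall s, OK s -> OK (map g s).
  move=> s [f o]; split; first exact: aut_FK (gam_aut hg) f.
  by rewrite -map_comp (eq_map (fun v => proj_g v hg)).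
have [[o|o] _] := k1 _ FK_D0.
  exact: (contra_Q k1 k2 k3 k4 o hm hgv).
pose OK' s := OK (rev s).
have k1' : HQ1 OK'.
  move=> s hs; have [[o1|o1] n1] := k1 _ (FK_rev hs).
    by split; [left|].
  by split; [right|].
have k2' : HQ2 OK'.
  move=> s s' u v o1 o2 a1 a2.
  by rewrite -size_rev -[size s']size_rev; apply: (k2 _ _ v u o1 o2); apply: adj_in_rev.
have k3' : HQ3 OK'.
  move=> n t; rewrite /OK' rev_rot; have [k ->] := rotr_ex n (rev t); exact: k3.
have k4' : forall s, OK' s -> OK' (map g s).
  by move=> s; rewrite /OK' -map_rev; apply: k4.
exact: (contra_Q k1' k2' k3' k4' o hm hgv).
Qed.

End Gam.

Definition v00 : VK := vx' 0 0 0.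

Lemma rot_ne_check : all (fun m => (iter m Rv v00).2 != v00.2) (iota 1 5).
Proof. by vm_compute. Qed.

Ltac clr := repeat match goal with H : is_true _ |- _ => clear H end.

Section Free.
Variable Gamma : (VK -> VK) -> Prop.
Hypothesis hfree : acts_freely Gamma.

Lemma not_id g a b m : (forall v, g v = shift a b (iter m Rv v)) -> 0 < m < 6 -> g = id -> False.
Proof.
move=> hg hm e.
have hin : m \in iota 1 5 by rewrite mem_iota; lia.
have := (allP rot_ne_check) m hin.
have e' : v00 = shift a b (iter m Rv v00) by rewrite -hg e.
have -> : v00.2 = (iter m Rv v00).2 by rewrite {1}e'.
by rewrite eqxx.
Qed.

Lemma free_face g a b m p q c d f0 : Gamma g -> (forall v, g v = shift a b (iter m Rv v)) ->
  0 < m < 6 -> FK f0 -> all (fun z => shift c d (iter m Rv z) \in f0) f0 ->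
  ((iter m LR (p, q)).1 + a = c + p)%Z -> ((iter m LR (p, q)).2 + b = d + q)%Z -> False.
Proof.
move=> hG hg hm hf /allP hc e1 e2.
apply: (not_id hg hm).
case: hfree => _ [_ h3]; apply: (h3 g (map (shift p q) f0) hG (FK_shift p q hf)).
move=> x /In_mem /mapP [z hz ->]; apply: mem_In.
rewrite hg iterR_shift !shiftK e1 e2 -shiftK; apply: map_f; exact: hc.
Qed.

Lemma free_vertex g a b m p q c d z0 : Gamma g -> (forall v, g v = shift a b (iter m Rv v)) ->
  0 < m < 6 -> shift c d (iter m Rv z0) == z0 ->
  ((iter m LR (p, q)).1 + a = c + p)%Z -> ((iter m LR (p, q)).2 + b = d + q)%Z -> False.
Proof.
move=> hG hg hm /eqP hc e1 e2.
apply: (not_id hg hm).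
case: hfree => h1 _; apply: (h1 g (shift p q z0) hG).
by rewrite hg iterR_shift !shiftK e1 e2 -shiftK hc.
Qed.

Definition Sq1 : seq VK := [:: vx' 0 0 1; vx' 0 0 2; vx' 0 1 7; vx' 0 1 8].
Definition Sq2 : seq VK := [:: vx' 1 0 3; vx' 1 0 4; vx' 0 1 9; vx' 0 1 10].

Lemma free_checks :
  [&& all (fun z => shift 0 0 (iter 1 Rv z) \in D0) D0,
      all (fun z => shift 0 0 (iter 5 Rv z) \in D0) D0,
      all (fun z => shift 0 0 (iter 2 Rv z) \in D0) D0,
      all (fun z => shift 0 0 (iter 4 Rv z) \in D0) D0,
      all (fun z => shift 0 0 (iter 3 Rv z) \in D0) D0 &
  [&& all (fun z => shift 1 0 (iter 3 Rv z) \in Q0) Q0,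
      all (fun z => shift 0 1 (iter 3 Rv z) \in Sq1) Sq1,
      all (fun z => shift 1 1 (iter 3 Rv z) \in Sq2) Sq2,
      shift 1 0 (iter 2 Rv (vx' 0 0 12)) == vx' 0 0 12,
      shift 2 0 (iter 2 Rv (vx' 0 0 13)) == vx' 0 0 13 &
  [&& shift 1 0 (iter 4 Rv (vx' 0 (-1) 13)) == vx' 0 (-1) 13,
      shift 2 0 (iter 4 Rv (vx' 1 (-1) 12)) == vx' 1 (-1) 12,
      Sq1 \in faces_at (vx' 0 0 1) & Sq2 \in faces_at (vx' 1 0 3)]]].
Proof. by vm_compute. Qed.

Lemma no_rotation g a b m : Gamma g -> 0 < m < 6 ->
  (forall v, g v = shift a b (pm m false v)) -> False.
Proof.
move=> hG hm hgv; have hg : forall v, g v = shift a b (iter m Rv v) by [].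
have H : m = 1 \/ m = 2 \/ m = 3 \/ m = 4 \/ m = 5 by lia.
have /and5P [c1 c5 c2 c4 /andP [c3 /and5P [s1 s2 s3 v1 /andP [v2 /and4P [v3 v4 f1 f2]]]]] := free_checks.
have FS1 : FK Sq1 := faces_at_FK f1.
have FS2 : FK Sq2 := faces_at_FK f2.
case: H => [em|[em|[em|[em|em]]]]; subst m.
- by apply: (free_face (p := (- b)%Z) (q := (a + b)%Z) hG hg hm FK_D0 c1) ; cbn [iter LR fst snd]; clr; lia.
- have hdm := Z.div_mod (a - b) 3 ltac:(clr; lia).
  have hmb := Z.mod_pos_bound (a - b) 3 ltac:(clr; lia).
  set t := ((a - b) / 3)%Z in hdm; set r := ((a - b) mod 3)%Z in hdm hmb.
  have : r = 0%Z \/ r = 1%Z \/ r = 2%Z by clr; lia.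
  case=> [er|[er|er]].
  + by apply: (free_face (p := t) (q := (b + t)%Z) hG hg hm FK_D0 c2) ; cbn [iter LR fst snd]; clr; lia.
  + by apply: (free_vertex (p := t) (q := (b + t)%Z) hG hg hm v1) ; cbn [iter LR fst snd]; clr; lia.
  + by apply: (free_vertex (p := t) (q := (b + t)%Z) hG hg hm v2) ; cbn [iter LR fst snd]; clr; lia.
- have hda := Z.div_mod a 2 ltac:(clr; lia).
  have hma := Z.mod_pos_bound a 2 ltac:(clr; lia).
  have hdb := Z.div_mod b 2 ltac:(clr; lia).
  have hmb := Z.mod_pos_bound b 2 ltac:(clr; lia).
  set p := (a / 2)%Z in hda; set ra := (a mod 2)%Z in hda hma.
  set q := (b / 2)%Z in hdb; set rb := (b mod 2)%Z in hdb hmb.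
  have : (ra = 0 \/ ra = 1)%Z by clr; lia.
  have : (rb = 0 \/ rb = 1)%Z by clr; lia.
  case=> [eb|eb] [ea|ea].
  + by apply: (free_face (p := p) (q := q) hG hg hm FK_D0 c3) ; cbn [iter LR fst snd]; clr; lia.
  + by apply: (free_face (p := p) (q := q) hG hg hm FK_Q0 s1) ; cbn [iter LR fst snd]; clr; lia.
  + by apply: (free_face (p := p) (q := q) hG hg hm FS1 s2) ; cbn [iter LR fst snd]; clr; lia.
  + by apply: (free_face (p := p) (q := q) hG hg hm FS2 s3) ; cbn [iter LR fst snd]; clr; lia.
- have hdm := Z.div_mod (a - b) 3 ltac:(clr; lia).
  have hmb := Z.mod_pos_bound (a - b) 3 ltac:(clr; lia).
  set t := ((a - b) / 3)%Z in hdm; set r := ((a - b) mod 3)%Z in hdm hmb.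
  have : r = 0%Z \/ r = 1%Z \/ r = 2%Z by clr; lia.
  case=> [er|[er|er]].
  + by apply: (free_face (p := (a - t)%Z) (q := (- t)%Z) hG hg hm FK_D0 c4) ; cbn [iter LR fst snd]; clr; lia.
  + by apply: (free_vertex (p := (a - 1 - t)%Z) (q := (- t)%Z) hG hg hm v3) ; cbn [iter LR fst snd]; clr; lia.
  + by apply: (free_vertex (p := (a - 2 - t)%Z) (q := (- t)%Z) hG hg hm v4) ; cbn [iter LR fst snd]; clr; lia.
- by apply: (free_face (p := (a + b)%Z) (q := (- a)%Z) hG hg hm FK_D0 c5) ; cbn [iter LR fst snd]; clr; lia.
Qed.

End Free.

Definition sg (c d : Z) (e : bool) (v : VK) : VK := shift c d (if e then iter 3 Rv v else v).

Lemma R3_shift x y v : iter 3 Rv (shift x y v) = shift (- x) (- y) (iter 3 Rv v).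
Proof. rewrite iterR_shift /=; congr shift; lia. Qed.

Lemma map_aut_sg c d e : map_aut FK (sg c d e).
Proof.
rewrite /sg; case: e.
  have -> : (fun v => shift c d (iter 3 Rv v)) = shift c d \o pm 3 false by [].
  apply: map_aut_comp; [exact: map_aut_shift|exact: map_aut_pm].
have -> : (fun v => shift c d v) = shift c d by [].
exact: map_aut_shift.
Qed.

Definition sg_inv c d (e : bool) := if e then sg c d true else sg (- c) (- d) false.

Lemma sg_cancel c d e : cancel (sg c d e) (sg_inv c d e).
Proof.
case: e => v; rewrite /sg_inv /sg.
  by rewrite R3_shift shiftK -iterD R6 -[RHS]shift0; congr shift; lia.
exact: shift_cancel.
Qed.

Lemma sg_cancel' c d e : cancel (sg_inv c d e) (sg c d e).
Proof.
case: e => v; rewrite /sg_inv /sg.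
  by rewrite R3_shift shiftK -iterD R6 -[RHS]shift0; congr shift; lia.
exact: shift_cancel'.
Qed.

Lemma tbl_check : all (fun k =>
  let: (j, e, c, d) := (if k < 6 then (k, false, 0%Z, 0%Z) else if k < 12 then (k - 6, true, 0%Z, 0%Z)
                        else if k == 12 then (12, false, 0%Z, 0%Z) else (12, true, 1%Z, 1%Z)) in
  (j \in [:: 0; 1; 2; 3; 4; 5; 12]) && (sg c d e (vx' 0 0 j) == vx' 0 0 k)) (iota 0 14).
Proof. by vm_compute. Qed.

Section Final.
Variable Gamma : (VK -> VK) -> Prop.
Hypothesis hsub : aut_subgroup Gamma.
Hypothesis hfree : acts_freely Gamma.
Hypothesis hor : orientable (FX Gamma).

Lemma gam_shift g : Gamma g -> exists a b, forall v, g v = shift a b v.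
Proof.
move=> hg; have [a [b [m [e [hm hgv]]]]] := classify (gam_aut hsub hg).
case: e hgv => hgv; first by case: (no_reflection hsub hor hg hm hgv).
case: m hm hgv => [|m] hm hgv; first by exists a, b.
by case: (no_rotation hfree hg (m := m.+1) ltac:(lia) hgv).
Qed.

Lemma sg_norm c d e g v : Gamma g -> exists g', Gamma g' /\ sg c d e (g v) = g' (sg c d e v).
Proof.
move=> hg; have [a [b hab]] := gam_shift hg.
case: e.
  have [h [hh [c1 c2]]] := gam_inv hsub hg.
  exists h; split => //.
  have hi : forall w, h w = shift (- a) (- b) w.
    by move=> w; rewrite -{1}(shift_cancel' a b w) -hab c1.
  by rewrite hi /sg hab R3_shift !shiftK; congr shift; lia.
exists g; split => //; rewrite /sg !hab !shiftK; congr shift; lia.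
Qed.

Lemma sg_inv_norm c d e g v : Gamma g -> exists g', Gamma g' /\ sg_inv c d e (g v) = g' (sg_inv c d e v).
Proof. case: e; exact: sg_norm. Qed.

Definition rep (A : VX Gamma) : VK := proj1_sig (constructive_indefinite_description _ (proj2_sig A)).

Lemma rep_spec A : proj Gamma (rep A) = A.
Proof.
rewrite /rep; case: (constructive_indefinite_description _ _) => x /= hx.
case: A hx => P hP /= hx; rewrite /proj; subst P; congr exist; exact: proof_irrelevance.
Qed.

Lemma proj_inv u v : proj Gamma u = proj Gamma v -> exists g, Gamma g /\ g u = v.
Proof.
move/(congr1 (@proj1_sig _ _)) => /= e.
have : orbit Gamma v v by exists id; split => //; exact: gam_id hsub.
by rewrite -e.
Qed.

Definition ind (s : VK -> VK) (A : VX Gamma) : VX Gamma := proj Gamma (s (rep A)).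

Lemma ind_proj (s : VK -> VK) v :
  (forall g w, Gamma g -> exists g', Gamma g' /\ s (g w) = g' (s w)) ->
  ind s (proj Gamma v) = proj Gamma (s v).
Proof.
move=> hn; rewrite /ind.
have [g [hg e]] := proj_inv (rep_spec (proj Gamma v)).
have [g' [hg' e']] := hn g (rep (proj Gamma v)) hg.
by rewrite -(proj_g hsub (s (rep (proj Gamma v))) hg') -e' e.
Qed.

Lemma FX_ind (s : VK -> VK) t : map_aut FK s ->
  (forall g w, Gamma g -> exists g', Gamma g' /\ s (g w) = g' (s w)) ->
  FX Gamma t -> FX Gamma (map (ind s) t).
Proof.
move=> ha hn [s0 [hs ->]]; exists (map s s0); split; first exact: aut_FK ha hs.
rewrite -!map_comp; apply: eq_map => v /=; exact: ind_proj.
Qed.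

Lemma map_aut_ind c0 d0 e0 : map_aut (FX Gamma) (ind (sg c0 d0 e0)).
Proof.
have n1 : forall g w, Gamma g -> exists g', Gamma g' /\ sg c0 d0 e0 (g w) = g' (sg c0 d0 e0 w).
  move=> g w; exact: sg_norm.
have n2 : forall g w, Gamma g -> exists g', Gamma g' /\ sg_inv c0 d0 e0 (g w) = g' (sg_inv c0 d0 e0 w).
  move=> g w; exact: sg_inv_norm.
have a2 : map_aut FK (sg_inv c0 d0 e0) by case: (e0); exact: map_aut_sg.
have k1 : cancel (ind (sg c0 d0 e0)) (ind (sg_inv c0 d0 e0)).
  move=> A; rewrite -{1}(rep_spec A) !ind_proj // sg_cancel; exact: rep_spec.
have k2 : cancel (ind (sg_inv c0 d0 e0)) (ind (sg c0 d0 e0)).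
  move=> A; rewrite -{1}(rep_spec A) !ind_proj // sg_cancel'; exact: rep_spec.
split; first by exists (ind (sg_inv c0 d0 e0)).
move=> t; split; first exact: FX_ind (map_aut_sg c0 d0 e0) n1.
move/(FX_ind a2 n2); by rewrite -map_comp (eq_map k1) map_id.
Qed.

End Final.

Definition tbl (k : nat) : nat * bool * Z * Z :=
  if k < 6 then (k, false, 0%Z, 0%Z) else if k < 12 then (k - 6, true, 0%Z, 0%Z)
  else if k == 12 then (12, false, 0%Z, 0%Z) else (12, true, 1%Z, 1%Z).

Lemma tbl_check2 : all (fun k =>
  let: (j, e, c, d) := tbl k in
  (j \in [:: 0; 1; 2; 3; 4; 5; 12]) && (sg c d e (vx' 0 0 j) == vx' 0 0 k)) (iota 0 14).
Proof. by vm_compute. Qed.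

Lemma In_map_mem (T : eqType) (U : Type) (f : T -> U) x s : x \in s -> List.In (f x) (map f s).
Proof.
elim: s => //= y s IH; rewrite in_cons => /orP [/eqP ->|h]; [by left|right; exact: IH].
Qed.

Theorem theorem1 (Gamma : (VK -> VK) -> Prop) :
  aut_subgroup Gamma ->
  acts_freely Gamma ->
  polyhedral (FX Gamma) ->
  torus_map (FX Gamma) ->
  exists reps : seq (VX Gamma),
    size reps <= 7 /\
    forall x : VX Gamma, exists y, List.In y reps /\
      exists phi, map_aut (FX Gamma) phi /\ phi y = x.
Proof.
move=> hs hf _ [hor _].
exists [seq proj Gamma (vx' 0 0 j) | j <- [:: 0; 1; 2; 3; 4; 5; 12]]; split => // x.
set v := rep x.
have hx : x = proj Gamma v by rewrite /v rep_spec.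
have hk : val v.2 \in iota 0 14 by rewrite mem_iota /=.
have := (allP tbl_check2) _ hk.
case: (tbl (val v.2)) => [[[j e] c] d] /andP [hj /eqP he].
exists (proj Gamma (vx' 0 0 j)); split; first exact: (In_map_mem (fun j => proj Gamma (vx' 0 0 j)) hj).
exists (@ind Gamma (sg (v.1.1 + c) (v.1.2 + d) e)); split; first exact: map_aut_ind.
rewrite (ind_proj hs); last by move=> g w hg; apply: sg_norm.
have -> : sg (v.1.1 + c) (v.1.2 + d) e (vx' 0 0 j) = shift v.1.1 v.1.2 (sg c d e (vx' 0 0 j)).
  by rewrite /sg shiftK; congr shift; lia.
by rewrite he -decomp hx.
Qed.
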